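(* Let $h_1,h_2$ be flow graphs over a flow monoid with $X=h_1.X=h_2.X$ and $h_1.\mathit{in}=h_2.\mathit{in}$. Let $F$ satisfy $\mathrm{Out}(h_1,h_2)\subseteq F\subseteq X$ and $\mathrm{TF}_{h_1,h_2}(F)=\emptyset$. Then $(h_1|_F).\mathit{in}=(h_2|_F).\mathit{in}$.
   Context: A flow monoid is a commutative monoid $(\mathbb{M},+,0)$ such that $n\le m :\iff \exists o.\ m=n+o$ is a partial order in which every ascending chain $K$ has a least upper bound $\bigsqcup K$, and $n+\bigsqcup K=\bigsqcup(n+K)$. $\mathcal{C}(\mathbb{M}\to\mathbb{M})$ is the set of functions commuting with least upper bounds of ascending chains. Infinite sums denote least upper bounds of finite partial sums. A flow graph is $h=(X,E,\mathit{in})$ with $X\subseteq\mathbb{N}$ finite, $E:X\times\mathbb{N}\to\mathcal{C}(\mathbb{M}\to\mathbb{M})$, $\mathit{in}:(\mathbb{N}\setminus X)\times X\to\mathbb{M}$; $\mathit{in}_x=\sum_{y\in\mathbb{N}\setminus X}\mathit{in}(y,x)$; the flow $h.\mathit{flow}$ is the least $\mathit{flow}:X\to\mathbb{M}$ with $\mathit{flow}(x)=\mathit{in}_x+\sum_{y\in X}E(y,x)(\mathit{flow}(y))$; the outflow is $h.\mathit{out}(x,y)=E(x,y)(h.\mathit{flow}(x))$ for $x\in X$, $y\notin X$. Transfer function: $\mathsf{tf}(h)(\mathit{in}')$ is the outflow of $(X,E,\mathit{in}')$ for any inflow $\mathit{in}'$. Restriction: for $Y\subseteq\mathbb{N}$,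 $h|_Y=(X\cap Y,\ E|_{(X\cap Y)\times\mathbb{N}},\ \mathit{in}')$ with $\mathit{in}'(z,y)=\mathit{in}(z,y)$ for $z\notin X$, $y\in X\cap Y$, and $\mathit{in}'(x,y)=E(x,y)(h.\mathit{flow}(x))$ for $x\in X\setminus Y$, $y\in X\cap Y$. For $h_1,h_2$ over the same node set $X$: $\mathrm{Out}(h_1,h_2)=\{x\in X\mid \exists z\in\mathbb{N}.\ h_1.E(x,z)\neq h_2.E(x,z)\}$, and for $Z\subseteq X$ the transfer failure is $\mathrm{TF}_{h_1,h_2}(Z)=\{x\in\mathbb{N}\setminus Z\mid \exists\,\mathit{in}\le (h_1|_Z).\mathit{in}\ \exists z\in Z:\ \mathsf{tf}(h_1|_Z)(\mathit{in})(z,x)\neq\mathsf{tf}(h_2|_Z)(\mathit{in})(z,x)\}$ (inflows compared pointwise). *)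

(* Defs.v *)
From HB Require Import structures.
From mathcomp Require Import all_boot finmap.
From Stdlib Require Import ClassicalEpsilon.
Set Implicit Arguments. Unset Strict Implicit. Unset Printing Implicit Defensive.
Local Open Scope fset_scope.

Definition ale {T : Type} (add : T -> T -> T) (n m : T) : Prop :=
  exists o, m = add n o.

Definition is_lub_wrt {T : Type} (add : T -> T -> T) (K : T -> Prop) (l : T) : Prop :=
  (forall k, K k -> ale add k l) /\
  (forall u, (forall k, K k -> ale add k u) -> ale add l u).

Definition chain_wrt {T : Type} (add : T -> T -> T) (K : T -> Prop) : Prop :=
  (exists k, K k) /\ (forall a b, K a -> K b -> ale add a b \/ ale add b a).

Definition img {T : Type} (f : T -> T) (K : T -> Prop) : T -> Prop :=
  fun y => exists k, K k /\ y = f k.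

Record flowMonoid := FlowMonoid {
  fm_car :> Type;
  fm_add : fm_car -> fm_car -> fm_car;
  fm_zero : fm_car;
  fm_addA : forall a b c, fm_add a (fm_add b c) = fm_add (fm_add a b) c;
  fm_addC : forall a b, fm_add a b = fm_add b a;
  fm_add0 : forall a, fm_add a fm_zero = a;
  (* reflexivity and transitivity of ale follow from the monoid laws *)
  fm_antisym : forall n m, ale fm_add n m -> ale fm_add m n -> n = m;
  fm_chain_lub : forall K, chain_wrt fm_add K -> exists l, is_lub_wrt fm_add K l;
  fm_add_cont : forall (K : fm_car -> Prop) n l, chain_wrt fm_add K ->
      is_lub_wrt fm_add K l -> is_lub_wrt fm_add (img (fm_add n) K) (fm_add n l)
}.

Section FlowDefs.
Variable M : flowMonoid.

Definition mle (n m : M) := ale (@fm_add M) n m.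
Definition is_lub (K : M -> Prop) (l : M) := is_lub_wrt (@fm_add M) K l.
Definition chain (K : M -> Prop) := chain_wrt (@fm_add M) K.

(* the least upper bound (meaningful when it exists, e.g. for chains) *)
Definition sup (K : M -> Prop) : M :=
  epsilon (inhabits (@fm_zero M)) (is_lub K).

Definition continuousM (f : M -> M) : Prop :=
  forall K l, chain K -> is_lub K l -> is_lub (img f K) (f l).

(* E is meaningful on X x N, in on (N \ X) x X; other values are irrelevant *)
Record flowGraph := FlowGraph {
  fg_X : {fset nat};
  fg_E : nat -> nat -> M -> M;
  fg_Econt : forall x y, x \in fg_X -> continuousM (fg_E x y);
  fg_in : nat -> nat -> M
}.

Definition msum (s : seq nat) (F : nat -> M) : M :=
  \big[@fm_add M/@fm_zero M]_(y <- s) F y.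

(* in_x = sum_{y in N \ X} in(y,x) : lub of the finite partial sums *)
Definition partial_inflow (h : flowGraph) (x : nat) (n : nat) : M :=
  msum [seq y <- iota 0 n | y \notin fg_X h] (fun y => fg_in h y x).

Definition inflow_at (h : flowGraph) (x : nat) : M :=
  sup (fun m => exists n, m = partial_inflow h x n).

Definition flow_solution (h : flowGraph) (f : nat -> M) : Prop :=
  forall x, x \in fg_X h ->
    f x = fm_add (inflow_at h x)
                 (msum (enum_fset (fg_X h)) (fun y => fg_E h y x (f y))).

Definition is_flow (h : flowGraph) (f : nat -> M) : Prop :=
  (forall x, x \notin fg_X h -> f x = @fm_zero M) /\
  flow_solution h f /\
  (forall g, flow_solution h g -> forall x, x \in fg_X h -> mle (f x) (g x)).

Definition flow (h : flowGraph) : nat -> M :=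
  epsilon (inhabits (fun _ : nat => @fm_zero M)) (is_flow h).

(* outflow, meaningful for x in X, y not in X *)
Definition outflow (h : flowGraph) (x y : nat) : M := fg_E h x y (flow h x).

Definition with_inflow (h : flowGraph) (inf : nat -> nat -> M) : flowGraph :=
  FlowGraph (@fg_Econt h) inf.

Definition tf (h : flowGraph) (inf : nat -> nat -> M) : nat -> nat -> M :=
  outflow (with_inflow h inf).

Lemma restr_cont (h : flowGraph) (Y : pred nat) :
  forall x y, x \in [fset z in fg_X h | Y z] -> continuousM (fg_E h x y).
Proof.
move=> x y; rewrite !inE => /andP [hx _]; exact: fg_Econt.
Qed.

Definition restrict (h : flowGraph) (Y : pred nat) : flowGraph :=
  @FlowGraph [fset z in fg_X h | Y z] (fg_E h) (@restr_cont h Y)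
    (fun z y => if z \in fg_X h then fg_E h z y (flow h z) else fg_in h z y).

Definition Out (h1 h2 : flowGraph) (x : nat) : Prop :=
  x \in fg_X h1 /\ exists z, fg_E h1 x z <> fg_E h2 x z.

Definition TF (h1 h2 : flowGraph) (Z : pred nat) (x : nat) : Prop :=
  ~~ Z x /\
  exists inf : nat -> nat -> M,
    (forall y z, y \notin fg_X (restrict h1 Z) -> z \in fg_X (restrict h1 Z) ->
        mle (inf y z) (fg_in (restrict h1 Z) y z)) /\
    exists z, Z z /\ tf (restrict h1 Z) inf z x <> tf (restrict h2 Z) inf z x.

End FlowDefs.

(* Main.v *)
Require Import Defs.
From mathcomp Require Import all_boot finmap.
From HB Require Import structures.
From Stdlib Require Import Classical ClassicalEpsilon.
Set Implicit Arguments. Unset Strict Implicit. Unset Printing Implicit Defensive.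


HB.instance Definition _ (M : flowMonoid) := Monoid.isComLaw.Build (fm_car M) (@fm_zero M) (@fm_add M) (@fm_addA M) (@fm_addC M) (fun a => etrans (fm_addC _ _) (fm_add0 a)).

Section L.
Variable M : flowMonoid.
Local Notation add := (@fm_add M).
Local Notation z0 := (@fm_zero M).

Lemma add0l (a : M) : add z0 a = a.
Proof. by rewrite fm_addC fm_add0. Qed.

Lemma mle_refl (a : M) : mle a a.
Proof. by exists z0; rewrite fm_add0. Qed.

Lemma mle_trans (a b c : M) : mle a b -> mle b c -> mle a c.
Proof. move=> [o ->] [p ->]; exists (add o p); by rewrite fm_addA. Qed.

Lemma mle0 (a : M) : mle z0 a.
Proof. by exists a; rewrite add0l. Qed.

Lemma mle_add (a b c d : M) : mle a b -> mle c d -> mle (add a c) (add b d).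
Proof.
move=> [o ->] [p ->]; exists (add o p).
rewrite -!fm_addA; congr (add a _).
by rewrite [add o _]fm_addC -!fm_addA [add p o]fm_addC.
Qed.

Lemma mle_addr (a b : M) : mle a (add a b).
Proof. by exists b. Qed.

Lemma mle_anti (a b : M) : mle a b -> mle b a -> a = b.
Proof. exact: fm_antisym. Qed.

Lemma lub_unique K (l l' : M) : is_lub K l -> is_lub K l' -> l = l'.
Proof. move=> [u1 l1] [u2 l2]; apply: mle_anti; [exact: l1|exact: l2]. Qed.

Lemma lub_ext (K K' : M -> Prop) l : (forall m, K m <-> K' m) -> is_lub K l -> is_lub K' l.
Proof.
move=> e [u lst]; split; first by move=> k /e; apply: u.
by move=> v hv; apply: lst => k /e; apply: hv.
Qed.

Lemma sup_spec K : (exists l : M, is_lub K l) -> is_lub K (sup K).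
Proof. move=> [l h]; rewrite /sup; apply: epsilon_spec; by exists l. Qed.

Definition rng (s : nat -> M) : M -> Prop := fun m => exists n, m = s n.
Definition mono (s : nat -> M) := forall n, mle (s n) (s n.+1).

Lemma mono_le s n m : mono s -> n <= m -> mle (s n) (s m).
Proof.
move=> hs; elim: m => [|m IH]; first by rewrite leqn0 => /eqP ->; apply: mle_refl.
rewrite leq_eqVlt => /orP [/eqP ->|]; first exact: mle_refl.
by rewrite ltnS => /IH h; apply: mle_trans h (hs m).
Qed.

Lemma chain_rng s : mono s -> chain (rng s).
Proof.
move=> hs; split; first by exists (s 0), 0.
move=> a b [n ->] [m ->]; case: (leqP n m) => h.
  by left; apply: mono_le.
by right; apply: mono_le => //; apply: ltnW.
Qed.

Lemma lub_ex s : mono s -> exists l, is_lub (rng s) l.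
Proof. by move=> /chain_rng /fm_chain_lub. Qed.

Lemma lub_shift s l N : mono s -> is_lub (rng s) l -> is_lub (rng (fun n => s (n + N))) l.
Proof.
move=> hs [u lst]; split; first by move=> k [n ->]; apply: u; exists (n + N).
move=> v hv; apply: lst => k [n ->]; apply: mle_trans (hv (s (n + N)) _).
  by apply: mono_le => //; rewrite leq_addr.
by exists n.
Qed.

Lemma lub_addc s l c : mono s -> is_lub (rng s) l -> is_lub (rng (fun n => add c (s n))) (add c l).
Proof.
move=> hs hl; have := fm_add_cont c (chain_rng hs) hl.
apply: lub_ext => m; split.
  by move=> [k [[n ->] ->]]; exists n.
by move=> [n ->]; exists (s n); split => //; exists n.
Qed.

Lemma lub_const c : is_lub (rng (fun _ => c)) c.
Proof. split; first by move=> k [_ ->]; apply: mle_refl. by move=> v hv; apply: hv; exists 0. Qed.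

Lemma mono_add a b : mono a -> mono b -> mono (fun n => add (a n) (b n)).
Proof. by move=> ha hb n; apply: mle_add. Qed.

Lemma lub_add2 a b A B : mono a -> mono b -> is_lub (rng a) A -> is_lub (rng b) B ->
  is_lub (rng (fun n => add (a n) (b n))) (add A B).
Proof.
move=> ha hb hA hB; split.
  move=> k [n ->]; apply: mle_add; [apply: hA.1|apply: hB.1]; by exists n.
move=> u hu.
have h1 : forall m, mle (add (a m) B) u.
  move=> m; apply: (lub_addc (a m) hb hB).2 => k [n ->].
  apply: mle_trans (hu (add (a (maxn m n)) (b (maxn m n))) _); last by exists (maxn m n).
  by apply: mle_add; apply: mono_le => //; rewrite ?leq_maxl ?leq_maxr.
have := lub_addc B ha hA; rewrite fm_addC => h2; apply: h2.2 => k [m ->].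
by rewrite fm_addC; apply: h1.
Qed.



Lemma msum_cons y s (F : nat -> M) : msum (y :: s) F = add (F y) (msum s F).
Proof. by rewrite /msum big_cons. Qed.

Lemma msum_mono s (F G : nat -> M) : (forall y, y \in s -> mle (F y) (G y)) -> mle (msum s F) (msum s G).
Proof.
elim: s => [|y s IH] h; first by rewrite /msum !big_nil; apply: mle_refl.
rewrite !msum_cons; apply: mle_add; first by apply: h; rewrite inE eqxx.
by apply: IH => x hx; apply: h; rewrite inE hx orbT.
Qed.

Lemma lub_msum (ys : seq nat) (s : nat -> nat -> M) (l : nat -> M) :
  (forall y, y \in ys -> mono (s y)) -> (forall y, y \in ys -> is_lub (rng (s y)) (l y)) ->
  mono (fun n => msum ys (fun y => s y n)) /\ is_lub (rng (fun n => msum ys (fun y => s y n))) (msum ys l).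
Proof.
elim: ys => [|y ys IH] hm hl.
  split; first by move=> n; rewrite /msum !big_nil; apply: mle_refl.
  rewrite /msum big_nil; apply: lub_ext (lub_const z0) => m; split; move=> [n ->]; exists n; by rewrite big_nil.
have [hm' hl'] : mono (fun n => msum ys (fun y => s y n)) /\ is_lub (rng (fun n => msum ys (fun y => s y n))) (msum ys l).
  by apply: IH => x hx; [apply: hm|apply: hl]; rewrite inE hx orbT.
have hy : y \in y :: ys by rewrite inE eqxx.
split.
  move=> n; rewrite !msum_cons; apply: mle_add; [exact: hm|exact: hm'].
rewrite msum_cons; have := lub_add2 (hm y hy) hm' (hl y hy) hl'.
apply: lub_ext => m; split; move=> [n ->]; exists n; by rewrite msum_cons.
Qed.

Lemma cont_mono (f : M -> M) a b : continuousM f -> mle a b -> mle (f a) (f b).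
Proof.
move=> hf hab.
have hc : chain (fun m => m = a \/ m = b).
  split; first by exists a; left.
  move=> x y [->|->] [->|->]; (try by left; apply: mle_refl); [by left|by right].
have hl : is_lub (fun m => m = a \/ m = b) b.
  split; first by move=> k [->|->] //; apply: mle_refl.
  by move=> u hu; apply: hu; right.
have [u _] := hf _ _ hc hl; apply: u; exists a; split => //; by left.
Qed.

Lemma lub_cont (f : M -> M) s l : continuousM f -> mono s -> is_lub (rng s) l ->
  mono (fun n => f (s n)) /\ is_lub (rng (fun n => f (s n))) (f l).
Proof.
move=> hf hs hl; split; first by move=> n; apply: cont_mono.
have := hf _ _ (chain_rng hs) hl; apply: lub_ext => m; split.
  by move=> [k [[n ->] ->]]; exists n.
by move=> [n ->]; exists (s n); split => //; exists n.
Qed.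

End L.

Section K.
Variable M : flowMonoid.
Local Notation add := (@fm_add M).
Local Notation z0 := (@fm_zero M).

Definition Phi (h : flowGraph M) (g : nat -> M) x :=
  add (inflow_at h x) (msum (enum_fset (fg_X h)) (fun y => fg_E h y x (g y))).

Lemma Phi_mono h (f g : nat -> M) x : (forall y, y \in fg_X h -> mle (f y) (g y)) ->
  mle (Phi h f x) (Phi h g x).
Proof.
move=> hfg; apply: mle_add; first exact: mle_refl.
apply: msum_mono => y hy; apply: cont_mono; [exact: fg_Econt|exact: hfg].
Qed.

Fixpoint Kl (h : flowGraph M) n : nat -> M :=
  match n with 0 => fun _ => z0 | n'.+1 => fun x => if x \in fg_X h then Phi h (Kl h n') x else z0 end.

Lemma Kl_mono h x : mono (fun n => Kl h n x).
Proof.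
move=> n; elim: n x => [|n IH] x; first exact: mle0.
rewrite /=; case: ifP => hx; last exact: mle_refl.
by apply: Phi_mono => y _; apply: IH.
Qed.

Definition prefixp (h : flowGraph M) (g : nat -> M) := forall x, x \in fg_X h -> mle (Phi h g x) (g x).

Lemma Kl_le h g : prefixp h g -> forall n x, x \in fg_X h -> mle (Kl h n x) (g x).
Proof.
move=> hg; elim=> [|n IH] x hx; first exact: mle0.
rewrite /= hx; apply: mle_trans (hg x hx); exact: Phi_mono.
Qed.

Lemma flow_spec h : is_flow h (flow h) /\ (forall g, prefixp h g -> forall x, x \in fg_X h -> mle (flow h x) (g x)).
Proof.
pose L x := if x \in fg_X h then sup (rng (fun n => Kl h n x)) else z0.
have hL : forall x, x \in fg_X h -> is_lub (rng (fun n => Kl h n x)) (L x).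
  by move=> x hx; rewrite /L hx; apply: sup_spec; apply: lub_ex; apply: Kl_mono.
have Lpre : forall g, prefixp h g -> forall x, x \in fg_X h -> mle (L x) (g x).
  move=> g hg x hx; apply: (hL x hx).2 => k [n ->]; exact: Kl_le.
have Lsol : flow_solution h L.
  move=> x hx; rewrite -/(Phi h L x).
  have [_ hs] := @lub_msum M (enum_fset (fg_X h)) (fun y n => fg_E h y x (Kl h n y)) (fun y => fg_E h y x (L y))
     (fun y hy => (lub_cont (fg_Econt x hy) (Kl_mono h y) (hL y hy)).1)
     (fun y hy => (lub_cont (fg_Econt x hy) (Kl_mono h y) (hL y hy)).2).
  have hm : mono (fun n => msum (enum_fset (fg_X h)) (fun y => fg_E h y x (Kl h n y))).
    by move=> n; apply: msum_mono => y hy; apply: cont_mono; [exact: fg_Econt|exact: Kl_mono].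
  have := lub_addc (inflow_at h x) hm hs => h2.
  apply: (lub_unique (lub_shift 1 (Kl_mono h x) (hL x hx))); apply: lub_ext h2 => m; split.
    by move=> [n ->]; exists n; rewrite addn1 /= hx.
  by move=> [n ->]; exists n; rewrite addn1 /= hx.
have hflowL : is_flow h L.
  split; first by move=> x hx; rewrite /L (negbTE hx).
  split => // g hg x hx; apply: Lpre => // y hy; rewrite (hg y hy); exact: mle_refl.
have hF : is_flow h (flow h) by rewrite /flow; apply: epsilon_spec; exists L.
split => // g hg x hx.
have [_ [_ le]] := hF; apply: mle_trans (le L Lsol x hx) (Lpre g hg x hx).
Qed.
End K.

Section C.
Variable M : flowMonoid.
Local Notation add := (@fm_add M).
Local Notation z0 := (@fm_zero M).

Lemma msum_eq_in s (f g : nat -> M) : (forall y, y \in s -> f y = g y) -> msum s f = msum s g.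
Proof. by move=> h; rewrite /msum big_seq [RHS]big_seq; apply: eq_bigr. Qed.

Lemma bigc_eq_in s (P : pred nat) (f g : nat -> M) : (forall y, y \in s -> P y -> f y = g y) ->
  \big[add/z0]_(y <- s | P y) f y = \big[add/z0]_(y <- s | P y) g y.
Proof. by move=> h; rewrite big_seq_cond [RHS]big_seq_cond; apply: eq_bigr => y /andP [] ; apply: h. Qed.

Lemma big_splitP (s : seq nat) (P Q : pred nat) (f : nat -> M) :
  \big[add/z0]_(y <- s | P y) f y =
  add (\big[add/z0]_(y <- s | P y && Q y) f y) (\big[add/z0]_(y <- s | P y && ~~ Q y) f y).
Proof.
elim: s => [|y s IH]; first by rewrite !big_nil fm_add0.
rewrite !big_cons IH; case: (P y); case: (Q y) => //=.
  by rewrite fm_addA.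
by rewrite !fm_addA [add (f y) _]fm_addC.
Qed.

Lemma mono_psum (P : pred nat) (a : nat -> M) : mono (fun n => msum [seq y <- iota 0 n | P y] a).
Proof. by move=> n; rewrite -addn1 iotaD filter_cat /msum big_cat; apply: mle_addr. Qed.

Lemma inflow_lub (h : flowGraph M) x : is_lub (rng (partial_inflow h x)) (inflow_at h x).
Proof. apply: sup_spec; apply: lub_ex; exact: mono_psum. Qed.

Lemma inflow_ext (h h' : flowGraph M) x : fg_X h = fg_X h' ->
  (forall y, y \notin fg_X h -> fg_in h y x = fg_in h' y x) -> inflow_at h x = inflow_at h' x.
Proof.
move=> hX hin; apply: (lub_unique (inflow_lub h x)); apply: lub_ext (inflow_lub h' x) => m.
suff e : forall n, partial_inflow h x n = partial_inflow h' x n.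
  by split; move=> [n ->]; exists n; rewrite e.
move=> n; rewrite /partial_inflow -hX /msum !big_filter; apply: eq_bigr => y hy; exact: hin.
Qed.

Lemma split_sum (X : {fset nat}) (F : pred nat) (f : nat -> M) :
  msum (enum_fset X) f = add (\big[add/z0]_(y <- enum_fset X | ~~ F y) f y) (msum (enum_fset [fset z in X | F z]%fset) f).
Proof.
rewrite /msum (big_splitP _ xpredT F) /= fm_addC; congr (add _ _).
rewrite -big_filter; apply: perm_big; apply: uniq_perm.
- by rewrite filter_uniq // fset_uniq.
- exact: fset_uniq.
by move=> y; rewrite mem_filter !inE andbC.
Qed.

Lemma inflow_restr (k : flowGraph M) (X : {fset nat}) (F : pred nat) x (a c : nat -> M) A :
  fg_X k = [fset z in X | F z]%fset ->
  (forall z, z \notin X -> fg_in k z x = a z) ->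
  (forall z, z \in X -> ~~ F z -> fg_in k z x = c z) ->
  is_lub (rng (fun n => msum [seq y <- iota 0 n | y \notin X] a)) A ->
  inflow_at k x = add A (\big[add/z0]_(y <- enum_fset X | ~~ F y) c y).
Proof.
move=> hX ha hc hA.
pose N := \max_(y <- enum_fset X) y.+1.
pose C := \big[add/z0]_(y <- enum_fset X | ~~ F y) c y.
have memX : forall y, (y \in [fset z in X | F z]%fset) = (y \in X) && F y by move=> y; rewrite !inE.
have e1 : forall n, partial_inflow k x n = add (msum [seq y <- iota 0 n | y \notin X] a)
     (\big[add/z0]_(y <- iota 0 n | (y \in X) && ~~ F y) c y).
  move=> n; rewrite /partial_inflow hX /msum big_filter (big_splitP _ _ (fun y => y \in X)) [RHS]fm_addC.
  congr (add _ _).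
    rewrite (eq_bigl (fun y => (y \in X) && ~~ F y)); last first.
      by move=> y; rewrite memX; case: (y \in X); case: (F y).
    by apply: eq_bigr => y /andP [h1 h2]; apply: hc.
  rewrite big_filter (eq_bigl (fun y => y \notin X)); last first.
    by move=> y; rewrite memX; case: (y \in X); case: (F y).
  by apply: eq_bigr => y hy; apply: ha.
have e2 : forall n, N <= n -> \big[add/z0]_(y <- iota 0 n | (y \in X) && ~~ F y) c y = C.
  move=> n hn; rewrite /C -[LHS]big_filter -[RHS]big_filter; apply: perm_big; apply: uniq_perm.
  - by rewrite filter_uniq // iota_uniq.
  - by rewrite filter_uniq // fset_uniq.
  move=> y; rewrite !mem_filter mem_iota add0n /=.
  case hy: (y \in X); rewrite ?andbF ?andbT //=.
  have : y.+1 <= N by apply: (@leq_bigmax_seq _ _ xpredT (fun y => y.+1)).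
  by move=> h; rewrite (leq_trans h hn) andbT.
have hk := lub_shift N (mono_psum _ _) (inflow_lub k x).
have hs := lub_addc C (fun n => mono_psum _ _ (n + N)) (lub_shift N (mono_psum _ _) hA).
rewrite fm_addC; apply: (lub_unique hk); apply: lub_ext hs => m.
have e3 : forall n, partial_inflow k x (n + N) = add C (msum [seq y <- iota 0 (n + N) | y \notin X] a).
  by move=> n; rewrite e1 e2 ?leq_addl // fm_addC.
by split; move=> [n ->]; exists n; move: (e3 n); rewrite /partial_inflow => ->.
Qed.

End C.

Section D.
Variable M : flowMonoid.
Local Notation add := (@fm_add M).
Local Notation z0 := (@fm_zero M).

Lemma restr_flow (h : flowGraph M) (F : pred nat) y : y \in fg_X h -> F y ->
  flow (restrict h F) y = flow h y.
Proof.
set h' := restrict h F.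
have hin' : forall x, inflow_at h' x = add (inflow_at h x)
    (\big[add/z0]_(y <- enum_fset (fg_X h) | ~~ F y) fg_E h y x (flow h y)).
  move=> x; apply: (@inflow_restr M h' (fg_X h) F x (fun z => fg_in h z x) (fun z => fg_E h z x (flow h z))) => //.
  - by move=> z hz; rewrite /= (negbTE hz).
  - by move=> z hz _; rewrite /= hz.
  - exact: inflow_lub.
have [[_ [solh _]] preh] := flow_spec h.
have [[_ [solh' _]] preh'] := flow_spec h'.
have memF : forall z, (z \in fg_X h') = (z \in fg_X h) && F z by move=> z; rewrite !inE.
have le1 : forall z, z \in fg_X h' -> mle (flow h' z) (flow h z).
  apply: preh' => x hx'.
  have hx : x \in fg_X h by move: hx'; rewrite memF => /andP [].
  suff -> : Phi h' (flow h) x = flow h x by apply: mle_refl.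
  rewrite (solh x hx) /Phi hin' [in RHS](split_sum _ F) fm_addA //.
pose f' z := if F z then flow h' z else flow h z.
have pre : prefixp h f'.
  move=> x hx.
  have eqPhi : Phi h f' x = Phi h' (flow h') x.
    rewrite /Phi (split_sum _ F) hin' -fm_addA; congr (add _ (add _ _)).
      by apply: bigc_eq_in => z _ hnF; rewrite /f' (negbTE hnF).
    apply: msum_eq_in => z hz; have : F z by move: hz; rewrite !inE => /andP [].
    by rewrite /f' => ->.
  case hFx: (F x).
    have hx' : x \in fg_X h' by rewrite memF hx hFx.
    rewrite eqPhi /f' hFx [X in mle _ X](solh' x hx'); exact: mle_refl.
  apply: mle_trans (Phi_mono (g := flow h) x _) _.
    move=> z hz; rewrite /f'; case: ifP => hFz; last exact: mle_refl.
    by apply: le1; rewrite memF hz hFz.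
  rewrite /f' hFx [X in mle _ X](solh x hx); exact: mle_refl.
move=> hy hFy; apply: mle_anti; first by apply: le1; rewrite memF hy hFy.
have := preh f' pre y hy; by rewrite /f' hFy.
Qed.

Lemma with_inflow_id (h : flowGraph M) : with_inflow h (fg_in h) = h.
Proof. by case: h. Qed.

Lemma key (ha hb : flowGraph M) (F : pred nat) :
  fg_X ha = fg_X hb ->
  (forall z y, z \notin fg_X ha -> y \in fg_X ha -> fg_in ha z y = fg_in hb z y) ->
  (forall y w, y \in fg_X ha -> ~~ F y -> fg_E ha y w = fg_E hb y w) ->
  (forall y x, y \in fg_X ha -> F y -> x \in fg_X ha -> ~~ F x ->
     tf (restrict ha F) (fg_in (restrict hb F)) y x = tf (restrict hb F) (fg_in (restrict hb F)) y x) ->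
  forall x, x \in fg_X ha -> ~~ F x -> mle (flow ha x) (flow hb x).
Proof.
move=> hX hin hE htf.
set inf := fg_in (restrict hb F).
set k := with_inflow (restrict ha F) inf.
pose q z := if F z then flow k z else flow hb z.
have [[_ [solk _]] _] := flow_spec k.
have [[_ [solb _]] _] := flow_spec hb.
have [_ prea] := flow_spec ha.
have memk : forall z, (z \in fg_X k) = (z \in fg_X ha) && F z by move=> z; rewrite !inE.
have hink : forall x, x \in fg_X ha -> inflow_at k x = add (inflow_at ha x)
    (\big[add/z0]_(y <- enum_fset (fg_X ha) | ~~ F y) fg_E hb y x (flow hb y)).
  move=> x hx; apply: (@inflow_restr M k (fg_X ha) F x (fun z => fg_in ha z x) (fun z => fg_E hb z x (flow hb z))) => //.
  - by move=> z hz; rewrite /k /inf /= -hX (negbTE hz); symmetry; apply: hin.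
  - by move=> z hz _; rewrite /k /inf /= -hX hz.
  - exact: inflow_lub.
have pre : prefixp ha q.
  move=> x hx.
  have e0 : Phi ha q x = add (inflow_at ha x)
      (add (\big[add/z0]_(y <- enum_fset (fg_X ha) | ~~ F y) fg_E hb y x (flow hb y))
           (msum (enum_fset [fset z in fg_X ha | F z]%fset) (fun y => fg_E ha y x (flow k y)))).
    rewrite /Phi (split_sum _ F); congr (add _ (add _ _)).
      by apply: bigc_eq_in => y hy hnF; rewrite /q (negbTE hnF) hE.
    apply: msum_eq_in => y hy; have : F y by move: hy; rewrite !inE => /andP [].
    by rewrite /q => ->.
  case hFx: (F x).
    have hx' : x \in fg_X k by rewrite memk hx hFx.
    rewrite e0 /q hFx [X in mle _ X](solk x hx') hink // -fm_addA; exact: mle_refl.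
  rewrite e0 /q hFx [X in mle _ X](solb x _) -?hX //.
  rewrite [in X in mle _ X](split_sum _ F) -(@inflow_ext M ha hb x hX); last by move=> y hy; apply: hin.
  suff -> : msum (enum_fset [fset z in fg_X ha | F z]%fset) (fun y => fg_E ha y x (flow k y)) =
            msum (enum_fset [fset z in fg_X ha | F z]%fset) (fun y => fg_E hb y x (flow hb y)).
    exact: mle_refl.
  apply: msum_eq_in => y hy.
  have [hyX hFy] : y \in fg_X ha /\ F y by move: hy; rewrite !inE => /andP [].
  have := htf y x hyX hFy hx (negbT hFx).
  rewrite /tf /outflow with_inflow_id /= => ->.
  by rewrite restr_flow // -hX.
move=> x hx hnF; have := prea q pre x hx; by rewrite /q (negbTE hnF).
Qed.

End D.

Unset Implicit Arguments.

Theorem lemma6 (M : flowMonoid) (h1 h2 : flowGraph M) (F : pred nat) :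
  fg_X h1 = fg_X h2 ->
  (forall z y, z \notin fg_X h1 -> y \in fg_X h1 -> fg_in h1 z y = fg_in h2 z y) ->
  (forall x, Out h1 h2 x -> F x) ->
  (forall x, F x -> x \in fg_X h1) ->
  (forall x, ~ TF h1 h2 F x) ->
  forall z y, z \notin fg_X (restrict h1 F) -> y \in fg_X (restrict h1 F) ->
    fg_in (restrict h1 F) z y = fg_in (restrict h2 F) z y.
Proof.
move=> hX hin hOut hFX hTF z y hz hy.
have [hyX hFy] : y \in fg_X h1 /\ F y by move: hy; rewrite !inE => /andP [].
have hE12 : forall y w, y \in fg_X h1 -> ~~ F y -> fg_E h1 y w = fg_E h2 y w.
  move=> y0 w hy0 hnF; apply: NNPP => hne.
  have := hOut y0 (conj hy0 (ex_intro _ w hne)); by rewrite (negbTE hnF).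
have le21 : forall x, x \in fg_X h1 -> ~~ F x -> mle (flow h2 x) (flow h1 x).
  move=> x hx hnF; apply: (@key M h2 h1 F) => //; rewrite -?hX //.
  - by move=> z0 y0 hz0 hy0; symmetry; apply: hin.
  - by move=> y0 w hy0 hnF0; symmetry; apply: hE12.
  move=> y0 x0 hy0 hFy0 hx0 hnFx0; apply: NNPP => hne; apply: (hTF x0); split => //.
  exists (fg_in (restrict h1 F)); split; first by move=> *; apply: mle_refl.
  by exists y0; split => // e; apply: hne.
have le12 : forall x, x \in fg_X h1 -> ~~ F x -> mle (flow h1 x) (flow h2 x).
  move=> x hx hnF; apply: (@key M h1 h2 F) => //.
  move=> y0 x0 hy0 hFy0 hx0 hnFx0; apply: NNPP => hne; apply: (hTF x0); split => //.
  exists (fg_in (restrict h2 F)); split; last by exists y0; split.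
  move=> a b ha hb /=; rewrite -hX; case: ifP => haX; last first.
    have hbX : b \in fg_X h1 by move: hb; rewrite !inE => /andP [].
    rewrite hin ?haX ?hbX //; exact: mle_refl.
  have hnFa : ~~ F a by move: ha; rewrite !inE haX.
  rewrite -(hE12 a b haX hnFa); apply: cont_mono; first exact: fg_Econt.
  exact: le21.
rewrite /= -hX; case: ifP => hz1 //.
  have hnFz : ~~ F z by move: hz; rewrite !inE hz1.
  by rewrite hE12 // (mle_anti (le12 z hz1 hnFz) (le21 z hz1 hnFz)).
by apply: hin; rewrite ?hz1.
Qed.
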